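(* Let $A=(a_{ij})_{1\le i,j\le n}$ be a complex Nekrasov matrix and let $\epsilon_1,\dots,\epsilon_n$ be real numbers satisfying either the conditions (C1) or the conditions (C2) below. Define $w_i:=\sum_{j=1}^{i-1}|a_{ij}|\frac{\epsilon_j}{|a_{jj}|}$ and $p_i:=\sum_{j=i+1}^{n}|a_{ij}|\frac{|a_{jj}|-h_j(A)-\epsilon_j}{|a_{jj}|}$ for $i\in N=\{1,\dots,n\}$. Then $\epsilon_i-w_i+p_i>0$ for all $i$ and $$\|A^{-1}\|_\infty\le \frac{\max_{i\in N}\frac{h_i(A)+\epsilon_i}{|a_{ii}|}}{\min_{i\in N}(\epsilon_i-w_i+p_i)}.$$
   Context: For a complex $n\times n$ matrix $A=(a_{ij})$ with $a_{ii}\ne 0$ for all $i$, define recursively $h_1(A):=\sum_{j\ne 1}|a_{1j}|$ and $h_i(A):=\sum_{j=1}^{i-1}|a_{ij}|\frac{h_j(A)}{|a_{jj}|}+\sum_{j=i+1}^{n}|a_{ij}|$ for $i=2,\dots,n$. $A$ is a Nekrasov matrix if $|a_{ii}|>h_i(A)$ for all $i\in\{1,\dots,n\}$. $\|\cdot\|_\infty$ is the matrix norm induced by the vector max-norm (maximum absolute row sum). Conditions (C1): $\epsilon_1>0$, and for $i=2,\dots,n$: $0<\epsilon_i\le |a_{ii}|-h_i(A)$ and $\epsilon_i>\sum_{j=1}^{i-1}\frac{|a_{ij}|\epsilon_j}{|a_{jj}|}$. Conditions (C2): let $k$ be the smallest index such that $a_{kj}=0$ for all $j>k$; $\epsilon_i=0$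 for $i=1,\dots,k-1$, and for $i=k,\dots,n$: $0<\epsilon_i<|a_{ii}|-h_i(A)$ and $\epsilon_i>\sum_{j=k}^{i-1}\frac{|a_{ij}|\epsilon_j}{|a_{jj}|}$ (empty sum for $i=k$). *)

(* Defs.v *)
From HB Require Import structures.
From mathcomp Require Import all_boot all_order all_algebra.
From mathcomp Require Import reals complex.
Set Implicit Arguments. Unset Strict Implicit. Unset Printing Implicit Defensive.
Import Order.TTheory GRing.Theory Num.Theory.
Local Open Scope ring_scope.

Section Nekrasov.
Variables (R : realType) (n : nat).
Implicit Types (A : 'M[R[i]]_n.+1).

Definition cabs (z : R[i]) : R := Normc.normc z.

(* row i of the recursion (0-based indices): given the list
   prev = [h_0; ...; h_{i-1}], compute h_i. *)
Definition h_step A (i : nat) (prev : seq R) : R :=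
  \sum_(j < n.+1 | (j < i)%N) cabs (A (inord i) j) * nth 0 prev j / cabs (A j j)
  + \sum_(j < n.+1 | (i < j)%N) cabs (A (inord i) j).

Fixpoint h_list A (k : nat) : seq R :=
  if k is k'.+1 then rcons (h_list A k') (h_step A k' (h_list A k')) else [::].

Definition h A (i : 'I_n.+1) : R := nth 0 (h_list A n.+1) i.

Definition nekrasov A : Prop :=
  (forall i, A i i != 0) /\ (forall i, h A i < cabs (A i i)).

Definition norm_inf (B : 'M[R[i]]_n.+1) : R :=
  \big[Num.max/0]_(i < n.+1) \sum_(j < n.+1) cabs (B i j).

(* Conditions (C1), 0-based: index 0 plays the role of index 1. *)
Definition cond_C1 A (eps : 'I_n.+1 -> R) : Prop :=
  0 < eps ord0 /\
  forall i : 'I_n.+1, (0 < i)%N ->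
    [/\ 0 < eps i, eps i <= cabs (A i i) - h A i &
        \sum_(j < n.+1 | (j < i)%N) cabs (A i j) * eps j / cabs (A j j) < eps i].

Definition cond_C2 A (eps : 'I_n.+1 -> R) : Prop :=
  exists k : 'I_n.+1,
    [/\ (forall j : 'I_n.+1, (k < j)%N -> A k j = 0),
        (forall k' : 'I_n.+1, (k' < k)%N -> exists j : 'I_n.+1, (k' < j)%N /\ A k' j != 0),
        (forall i : 'I_n.+1, (i < k)%N -> eps i = 0) &
        (forall i : 'I_n.+1, (k <= i)%N ->
          [/\ 0 < eps i, eps i < cabs (A i i) - h A i &
              \sum_(j < n.+1 | (k <= j < i)%N) cabs (A i j) * eps j / cabs (A j j) < eps i])].

Definition w A (eps : 'I_n.+1 -> R) (i : 'I_n.+1) : R :=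
  \sum_(j < n.+1 | (j < i)%N) cabs (A i j) * eps j / cabs (A j j).

Definition p A (eps : 'I_n.+1 -> R) (i : 'I_n.+1) : R :=
  \sum_(j < n.+1 | (i < j)%N)
     cabs (A i j) * (cabs (A j j) - h A j - eps j) / cabs (A j j).

End Nekrasov.

(* Main.v *)
Require Import Defs.
From HB Require Import structures.
From mathcomp Require Import all_boot all_order all_algebra.
From mathcomp Require Import reals complex.
From mathcomp Require Import ring lra.
Import Order.TTheory GRing.Theory Num.Theory.
Local Open Scope ring_scope.

Lemma cabs_normE {R : realType} (z : R[i]) : `|z| = ((cabs z)%:C)%C.
Proof. by []. Qed.

Lemma cabs_ge0 {R : realType} (z : R[i]) : 0 <= cabs z.
Proof. by case: z => a b; rewrite /cabs /= sqrtr_ge0. Qed.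

Lemma cabs0 {R : realType} : cabs (0 : R[i]) = 0.
Proof. exact: Normc.normc0. Qed.

Lemma cabs_eq0 {R : realType} (z : R[i]) : (cabs z == 0) = (z == 0).
Proof.
apply/eqP/eqP; first exact: Normc.eq0_normc.
by move=> ->; exact: cabs0.
Qed.

Lemma cabsM {R : realType} (x y : R[i]) : cabs (x * y) = cabs x * cabs y.
Proof. exact: Normc.normcM. Qed.

Lemma cabsV {R : realType} (x : R[i]) : cabs (x^-1) = (cabs x)^-1.
Proof. exact: Normc.normcV. Qed.

Lemma cabsD {R : realType} (x y : R[i]) : cabs (x + y) <= cabs x + cabs y.
Proof. exact: le_normcD. Qed.

Lemma cabsN {R : realType} (x : R[i]) : cabs (- x) = cabs x.
Proof. exact: normcN. Qed.

Lemma cabsB {R : realType} (x y : R[i]) : cabs (x - y) <= cabs x + cabs y.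
Proof. by rewrite -(cabsN y); exact: cabsD. Qed.

Lemma cabs_real {R : realType} (r : R) : cabs ((r%:C)%C) = `|r|.
Proof. by rewrite /cabs /= expr0n /= addr0 sqrtr_sqr. Qed.

Lemma cabs_sum {R : realType} (I : finType) (P : pred I) (F : I -> R[i]) :
  cabs (\sum_(i | P i) F i) <= \sum_(i | P i) cabs (F i).
Proof.
elim/big_ind2: _ => //; first by rewrite cabs0.
by move=> x1 x2 y1 y2 h1 h2; apply: le_trans (cabsD _ _) _; apply: lerD.
Qed.

Lemma size_h_list {R : realType} {n : nat} (A : 'M[R[i]]_n.+1) k :
  size (h_list A k) = k.
Proof. by elim: k => //= k IH; rewrite size_rcons IH. Qed.

Lemma nth_h_list {R : realType} {n : nat} (A : 'M[R[i]]_n.+1) j k k' :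
  (j < k)%N -> (k <= k')%N -> nth 0 (h_list A k) j = nth 0 (h_list A k') j.
Proof.
move=> jk; elim: k' => [|k' IH]; first by rewrite leqn0 => /eqP ke; subst k.
rewrite leq_eqVlt => /orP[/eqP -> //|]; rewrite ltnS => kk.
rewrite (IH kk) /= nth_rcons size_h_list (leq_trans jk kk).
done.
Qed.

Lemma h_rec {R : realType} {n : nat} (A : 'M[R[i]]_n.+1) (i : 'I_n.+1) :
  h A i = \sum_(j < n.+1 | (j < i)%N) cabs (A i j) * h A j / cabs (A j j)
          + \sum_(j < n.+1 | (i < j)%N) cabs (A i j).
Proof.
have -> : h A i = h_step A i (h_list A i).
  rewrite /h -(@nth_h_list _ _ A i i.+1 n.+1 (ltnSn i) (ltn_ord i)) /=.
  by rewrite nth_rcons size_h_list ltnn eqxx.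
rewrite /h_step inord_val; congr (_ + _).
apply: eq_bigr => j ji; congr (_ * _ / _).
rewrite /h; exact: nth_h_list ji (ltnW (ltn_ord i)).
Qed.

Lemma h_ge0 {R : realType} {n : nat} (A : 'M[R[i]]_n.+1) (i : 'I_n.+1) :
  0 <= h A i.
Proof.
have: forall m (i : 'I_n.+1), (i < m)%N -> 0 <= h A i; last by apply; apply: ltnSn.
elim=> [//|m IH] k km.
rewrite h_rec; apply: addr_ge0; apply: sumr_ge0 => j jk.
  rewrite mulr_ge0 ?invr_ge0 ?cabs_ge0 // mulr_ge0 ?cabs_ge0 //.
  by apply: IH; apply: leq_trans jk _.
exact: cabs_ge0.
Qed.

Lemma sum_split_neq {R : realType} {n : nat} (i : 'I_n.+1) (F : 'I_n.+1 -> R) :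
  \sum_(j < n.+1 | j != i) F j = \sum_(j < n.+1 | (j < i)%N) F j + \sum_(j < n.+1 | (i < j)%N) F j.
Proof.
rewrite (bigID (fun j : 'I_n.+1 => (j < i)%N)) /=.
congr (_ + _); apply: eq_bigl => j /=; rewrite -val_eqE /=.
  by case: (ltngtP (nat_of_ord j) (nat_of_ord i)).
by case: (ltngtP (nat_of_ord j) (nat_of_ord i)).
Qed.

Definition dd {R : realType} {n : nat} (A : 'M[R[i]]_n.+1) (eps : 'I_n.+1 -> R) j :=
  (h A j + eps j) / cabs (A j j).

Lemma gap_id {R : realType} {n : nat} (A : 'M[R[i]]_n.+1) (eps : 'I_n.+1 -> R) i :
  (forall j, A j j != 0) ->
  cabs (A i i) * dd A eps i - \sum_(j < n.+1 | j != i) cabs (A i j) * dd A eps j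
  = eps i - w A eps i + p A eps i.
Proof.
move=> nz.
have cnz j : cabs (A j j) != 0 by rewrite cabs_eq0.
rewrite sum_split_neq /dd mulrC divfK // h_rec /w /p.
have -> : \sum_(j < n.+1 | (j < i)%N) cabs (A i j) * ((h A j + eps j) / cabs (A j j))
   = \sum_(j < n.+1 | (j < i)%N) cabs (A i j) * h A j / cabs (A j j)
   + \sum_(j < n.+1 | (j < i)%N) cabs (A i j) * eps j / cabs (A j j).
  rewrite -big_split /=; apply: eq_bigr => j _.
  by rewrite mulrDl mulrDr !mulrA.
have -> : \sum_(j < n.+1 | (i < j)%N) cabs (A i j) * (cabs (A j j) - h A j - eps j) / cabs (A j j)
   = \sum_(j < n.+1 | (i < j)%N) cabs (A i j)
   - \sum_(j < n.+1 | (i < j)%N) cabs (A i j) * ((h A j + eps j) / cabs (A j j)).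
  rewrite -sumrB; apply: eq_bigr => j _.
  by field; apply: cnz.
lra.
Qed.

Lemma core {R : realType} {n : nat} (A : 'M[R[i]]_n.+1) (d : 'I_n.+1 -> R)
  (gam beta : R) (y x : 'cV[R[i]]_n.+1) :
  (forall j, 0 < d j) -> 0 < gam ->
  (forall m, gam <= cabs (A m m) * d m - \sum_(j < n.+1 | j != m) cabs (A m j) * d j) ->
  A *m y = x -> (forall j, cabs (x j 0) <= beta) ->
  forall i, cabs (y i 0) <= d i * (beta / gam).
Proof.
move=> dpos gpos Hg Ayx xb i.
pose F := fun j => cabs (y j 0) / d j.
have [m _ Hm] := @arg_maxP _ _ _ ord0 predT F isT.
set t := F m.
have t0 : 0 <= t by rewrite /t /F divr_ge0 ?cabs_ge0 // ltW.
have Hy j : cabs (y j 0) <= t * d j.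
  rewrite -ler_pdivrMr //; have := Hm j isT; exact.
have Hym : cabs (y m 0) = t * d m.
  by rewrite /t /F divfK // gt_eqF.
have row : A m m * y m 0 = x m 0 - \sum_(j < n.+1 | j != m) A m j * y j 0.
  by rewrite -Ayx mxE (bigD1 m) //= addrK.
set S := \sum_(j < n.+1 | j != m) cabs (A m j) * d j.
have Hs : cabs (\sum_(j < n.+1 | j != m) A m j * y j 0) <= t * S.
  apply: le_trans (cabs_sum _ _ _) _.
  rewrite /S mulr_sumr; apply: ler_sum => j _.
  rewrite cabsM mulrCA; apply: ler_wpM2l; first exact: cabs_ge0.
  exact: Hy.
have H1 : cabs (A m m) * (t * d m) <= beta + t * S.
  rewrite -Hym -cabsM row; apply: le_trans (cabsB _ _) _.
  by apply: lerD.
have H2 := ler_wpM2l t0 (Hg m).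
have H3 : t * gam <= beta.
  rewrite -/S in H2. nra.
have H4 : t <= beta / gam by rewrite ler_pdivlMr // .
apply: le_trans (Hy i) _.
rewrite [t * _]mulrC; apply: ler_wpM2l; first exact: ltW.
exact: H4.
Qed.

Lemma core_unit {R : realType} {n : nat} (A : 'M[R[i]]_n.+1) (d : 'I_n.+1 -> R)
  (gam : R) :
  (forall j, 0 < d j) -> 0 < gam ->
  (forall m, gam <= cabs (A m m) * d m - \sum_(j < n.+1 | j != m) cabs (A m j) * d j) ->
  A \in unitmx.
Proof.
move=> dpos gpos Hg.
rewrite unitmxE unitfE -det_tr; apply/negP => /det0P [v vnz vA].
have Ay : A *m v^T = 0 by rewrite -[A]trmxK -trmx_mul vA trmx0.
have := @core _ _ A d gam 0 _ 0 dpos gpos Hg Ay.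
have h0 : forall j : 'I_n.+1, cabs ((0 : 'cV[R[i]]_n.+1) j 0) <= 0.
  by move=> j; rewrite mxE cabs0.
move=> /(_ h0) Hc.
move/eqP: vnz; apply; apply/matrixP => a b.
rewrite (ord1 a) !mxE; apply/eqP; rewrite -cabs_eq0 eq_le cabs_ge0 andbT.
have := Hc b; rewrite mxE mul0r mulr0; exact.
Qed.

Lemma core_rowsum {R : realType} {n : nat} (A : 'M[R[i]]_n.+1) (d : 'I_n.+1 -> R)
  (gam : R) :
  (forall j, 0 < d j) -> 0 < gam ->
  (forall m, gam <= cabs (A m m) * d m - \sum_(j < n.+1 | j != m) cabs (A m j) * d j) ->
  forall i0, \sum_(j < n.+1) cabs (invmx A i0 j) <= d i0 * (1 / gam).
Proof.
move=> dpos gpos Hg i0.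
have uA := @core_unit _ _ A d gam dpos gpos Hg.
set B := invmx A.
pose x : 'cV[R[i]]_n.+1 := \col_j (if B i0 j == 0 then 0 else `|B i0 j| / B i0 j).
have Ay : A *m (B *m x) = x by rewrite mulmxA mulmxV // mul1mx.
have xb : forall j, cabs (x j 0) <= 1.
  move=> j; rewrite mxE; case: eqP => [_|/eqP bnz]; first by rewrite cabs0.
  rewrite cabsM cabsV cabs_normE cabs_real ger0_norm ?cabs_ge0 // mulfV //.
  by rewrite cabs_eq0.
have := @core _ _ A d gam 1 _ _ dpos gpos Hg Ay xb i0.
have -> : (B *m x) i0 0 = ((\sum_(j < n.+1) cabs (B i0 j))%:C)%C.
  rewrite mxE rmorph_sum; apply: eq_bigr => j _; rewrite mxE.
  case: eqP => [->|/eqP bnz]; first by rewrite mulr0 cabs0.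
  by rewrite mulrC divfK // -cabs_normE.
by rewrite cabs_real ger0_norm // sumr_ge0 // => j _; exact: cabs_ge0.
Qed.

Lemma sum_ge_term {R : realType} {n : nat} {P : pred 'I_n.+1} {F : 'I_n.+1 -> R} {l} :
  P l -> (forall j, P j -> 0 <= F j) -> F l <= \sum_(j < n.+1 | P j) F j.
Proof.
move=> Pl F0; rewrite (bigD1 l) //= lerDl; apply: sumr_ge0 => j /andP[Pj _].
exact: F0.
Qed.

Lemma cabs_gt0 {R : realType} {z : R[i]} : z != 0 -> 0 < cabs z.
Proof. by move=> nz; rewrite lt_def cabs_ge0 andbT cabs_eq0. Qed.

Lemma p_ge0 {R : realType} {n : nat} (A : 'M[R[i]]_n.+1) (eps : 'I_n.+1 -> R) (i : 'I_n.+1) :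
  (forall j, A j j != 0) ->
  (forall j : 'I_n.+1, (i < j)%N -> eps j <= cabs (A j j) - h A j) -> 0 <= p A eps i.
Proof.
move=> nz He; apply: sumr_ge0 => j ij.
rewrite divr_ge0 ?cabs_ge0 // mulr_ge0 ?cabs_ge0 //.
have := He j ij; lra.
Qed.

Theorem theorem3p2 (R : realType) (n : nat) (A : 'M[R[i]]_n.+1)
    (eps : 'I_n.+1 -> R) :
  nekrasov A ->
  cond_C1 A eps \/ cond_C2 A eps ->
  (forall i, 0 < eps i - w A eps i + p A eps i) /\
  norm_inf (invmx A) <=
    (\big[Num.max/(h A ord0 + eps ord0) / cabs (A ord0 ord0)]_(i < n.+1)
        ((h A i + eps i) / cabs (A i i)))
    / (\big[Num.min/eps ord0 - w A eps ord0 + p A eps ord0]_(i < n.+1)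
        (eps i - w A eps i + p A eps i)).
Proof.
move=> [nz hlt] Hc.
have cpos j : 0 < cabs (A j j) by apply: cabs_gt0.
have [gpos dpos] : (forall i, 0 < eps i - w A eps i + p A eps i) /\
                   (forall j, 0 < dd A eps j).
  case: Hc => [[e0 H1]|[k [_ Hprev Heps0 Hge]]].
  - have epos j : 0 < eps j.
      case: (posnP j) => [j0|jpos]; last by case: (H1 j jpos).
      by have -> : j = ord0 by apply: val_inj.
    split => [i|j]; last by rewrite /dd divr_gt0 // ltr_wpDl // h_ge0.
    have pge : 0 <= p A eps i.
      apply: p_ge0 => // j ij.
      by case: (H1 j (leq_ltn_trans (leq0n _) ij)).
    case: (posnP i) => [i0|ipos].
      have -> : w A eps i = 0 by rewrite /w big_pred0 // => j; rewrite i0 ltn0.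
      have := epos i; lra.
    case: (H1 i ipos) => _ _; rewrite -/(w A eps i) => hw; lra.
  - have ebd j : eps j <= cabs (A j j) - h A j.
      case: (ltnP j k) => [jk|kj].
        rewrite Heps0 //; have := hlt j; lra.
      by case: (Hge j kj) => _ /ltW.
    split => [i|j].
      have pge : 0 <= p A eps i by apply: p_ge0.
      case: (ltnP i k) => [ik|ki].
        have -> : w A eps i = 0.
          rewrite /w big1 // => j ji; rewrite Heps0 ?mulr0 ?mul0r //.
          exact: ltn_trans ji ik.
        rewrite Heps0 //.
        have [l [il nzl]] := Hprev i ik.
        have : 0 < p A eps i.
          have tl : 0 < cabs (A i l) * (cabs (A l l) - h A l - eps l) / cabs (A l l).
            rewrite divr_gt0 // mulr_gt0 ?cabs_gt0 //.
            case: (ltnP l k) => [lk|kl].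
              rewrite Heps0 //; have := hlt l; lra.
            by case: (Hge l kl) => _ hl _; lra.
          apply: lt_le_trans tl _; apply: (sum_ge_term il) => j ij /=.
          rewrite divr_ge0 ?cabs_ge0 // mulr_ge0 ?cabs_ge0 //.
          have := ebd j; lra.
        lra.
      have -> : w A eps i = \sum_(j < n.+1 | (k <= j < i)%N) cabs (A i j) * eps j / cabs (A j j).
        rewrite /w (bigID (fun j : 'I_n.+1 => (k <= j)%N)) /=.
        rewrite [X in _ + X]big1 ?addr0.
          by apply: eq_bigl => j; rewrite andbC.
        move=> j /andP[_]; rewrite -ltnNge => jk.
        by rewrite Heps0 ?mulr0 ?mul0r.
      by case: (Hge i ki) => _ _ hw; lra.
    rewrite /dd divr_gt0 //.
    case: (ltnP j k) => [jk|kj].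
      rewrite Heps0 // addr0.
      have [l [jl nzl]] := Hprev j jk.
      rewrite h_rec; apply: ltr_wpDl.
        apply: sumr_ge0 => l' _; rewrite divr_ge0 ?cabs_ge0 // mulr_ge0 ?cabs_ge0 ?h_ge0 //.
      have := @sum_ge_term _ _ (fun j0 : 'I_n.+1 => (j < j0)%N) (fun j0 => cabs (A j j0)) l jl.
      move=> /(_ (fun _ _ => cabs_ge0 _)) hs.
      exact: lt_le_trans (cabs_gt0 nzl) hs.
    by case: (Hge j kj) => e _ _; rewrite ltr_wpDl // h_ge0.
split => //.
set gam := \big[Num.min/_]_(i < n.+1) _.
set M := \big[Num.max/_]_(i < n.+1) _.
have gam_pos : 0 < gam by apply: lt_bigmin => // i _; exact: gpos.
have Hg m : gam <= cabs (A m m) * dd A eps m - \sum_(j < n.+1 | j != m) cabs (A m j) * dd A eps j.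
  by rewrite gap_id //; exact: bigmin_le.
have Md i : dd A eps i <= M by exact: le_bigmax.
have Mpos : 0 < M by apply: lt_le_trans (Md ord0); exact: dpos.
apply: bigmax_le => [|i _].
  by rewrite divr_ge0 // ltW.
apply: le_trans (@core_rowsum _ _ A (dd A eps) gam dpos gam_pos Hg i) _.
rewrite mul1r; apply: ler_wpM2r; first by rewrite invr_ge0 ltW.
exact: Md.
Qed.
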